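(* For every $\varepsilon\in(0,1)$ there is an integer $c=\Theta\!\left(\frac{\log(1/\varepsilon)}{\varepsilon}\right)$ such that the following two-round algorithm outputs, for every edge-weighted graph $G(V,E)$ with nonnegative weights and every integer $k\ge c$, a matching $M$ with $(3+\varepsilon)\cdot\mathbb{E}[w(M)]\ge \mathrm{opt}(G)$: (1) form a random $k$-clustering $G^{(1)},\ldots,G^{(k)}$ of $G$ with expected multiplicity $c$; (2) for each $i\in[k]$ compute $M_i:=\mathsf{Greedy}(G^{(i)},\pi)$, where $\pi$ is a fixed ordering of $E$ in non-increasing order of weight (ties broken consistently); (3) on the graph $H$ with vertex set $V$ and edge set $\bigcup_i M_i$, compute $M_G:=\mathsf{Greedy}(H,\pi)$, and output the heavier of $M_G$ and $M_1$.
   Context: $\mathrm{opt}(G)$ is the weight of a maximum weight matching; $w(M)$ is the total weight of $M$. $\mathsf{Greedy}(G,\pi)$ scans the edges of $G$ in the order $\pi$ and adds an edge $(u,v)$ to the matching iff neither endpoint is already matched. A random $k$-clustering with expected multiplicity $c$: independently for each edge $e$, draw $c_e\sim\mathrm{Bin}(k,c/k)$ and place $e$ in $c_e$ distinct uniformly random sets among $E^{(1)},\ldots,E^{(k)}$; $G^{(i)}=G(V,E^{(i)})$. The expectation is over the random clustering. *)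

(* Defs.v *)
From HB Require Import structures.
From mathcomp Require Import all_boot all_order all_algebra.
From mathcomp Require Import all_classical all_reals all_analysis.
Set Implicit Arguments. Unset Strict Implicit. Unset Printing Implicit Defensive.
Import Order.TTheory GRing.Theory Num.Theory.
Local Open Scope ring_scope.

Section Defs.
Variable R : realType.
Variable V : finType.

Definition simple_graph (E : {set {set V}}) : bool :=
  [forall e in E, #|e| == 2%N].

Definition is_matching (M : {set {set V}}) : bool :=
  [forall e in M, forall f in M, (e != f) ==> [disjoint e & f]].

Definition weight (w : {set V} -> R) (M : {set {set V}}) : R :=
  \sum_(e in M) w e.

Definition opt (E : {set {set V}}) (w : {set V} -> R) : R :=
  \big[Num.max/0]_(M : {set {set V}} | (M \subset E) && is_matching M) weight w M.

Definition weight_order (E : {set {set V}}) (w : {set V} -> R)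
  (pi : seq {set V}) : bool :=
  perm_eq pi (enum E) && sorted (fun a b => w b <= w a) pi.

Definition greedy_step (M : {set {set V}}) (e : {set V}) : {set {set V}} :=
  if [forall f in M, [disjoint e & f]] then e |: M else M.

Definition Greedy (F : {set {set V}}) (pi : seq {set V}) : {set {set V}} :=
  foldl greedy_step finset.set0 [seq e <- pi | e \in F].

(* A k-clustering is given by f : edge |-> set of indices of clusters containing it;
   E^(i) = edges e with i \in f e. *)
Definition cluster (k : nat) (E : {set {set V}})
  (f : {ffun {set V} -> {set 'I_k}}) (i : 'I_k) : {set {set V}} :=
  [set e in E | i \in f e].

(* Probability of the clustering f under the random k-clustering with expected
   multiplicity c: independently per edge, c_e ~ Bin(k, c/k), then a uniformly
   random c_e-subset of [k]; non-edges are in no cluster. *)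
Definition binom_pmf (k : nat) (p : R) (s : nat) : R :=
  'C(k, s)%:R * p ^+ s * (1 - p) ^+ (k - s).

Definition cluster_prob (k c : nat) (E : {set {set V}})
  (f : {ffun {set V} -> {set 'I_k}}) : R :=
  let p := c%:R / k%:R in
  (\prod_(e in E) (binom_pmf k p #|f e| / 'C(k, #|f e|)%:R))
  * \prod_(e in ~: E) (f e == finset.set0)%:R.

Definition alg_output (k : nat) (E : {set {set V}}) (w : {set V} -> R)
  (pi : seq {set V}) (f : {ffun {set V} -> {set 'I_k}}) : {set {set V}} :=
  let M1 := match (insub 0%N : option 'I_k) with
            | Some i => Greedy (cluster E f i) pi
            | None => finset.set0 end in
  let H := \bigcup_(i < k) Greedy (cluster E f i) pi in
  let MG := Greedy H pi in
  if weight w M1 <= weight w MG then MG else M1.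

Definition expected_weight (k c : nat) (E : {set {set V}}) (w : {set V} -> R)
  (pi : seq {set V}) : R :=
  \sum_(f : {ffun {set V} -> {set 'I_k}})
     cluster_prob c E f * weight w (alg_output E w pi f).

End Defs.

(* Main.v *)
Require Import Defs.
From HB Require Import structures.
From mathcomp Require Import all_boot all_order all_algebra.
From mathcomp Require Import all_classical all_reals all_analysis.
From mathcomp Require Import fintype finset bigop.
From mathcomp Require Import zify ring lra.
Import Order.TTheory GRing.Theory Num.Theory.
Local Open Scope ring_scope.
Set Implicit Arguments. Unset Strict Implicit. Unset Printing Implicit Defensive.

Section G.
Variables (R : realType) (V : finType) (E : {set {set V}}) (w : {set V} -> R)
  (pi : seq {set V}).
Hypothesis pi_uniq : uniq pi.
Hypothesis pi_mem : forall x, (x \in pi) = (x \in E).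
Hypothesis pi_sorted : sorted (fun a b => w b <= w a) pi.

Local Notation gs := (@greedy_step V).

Lemma foldl_grow (M : {set {set V}}) (s : seq {set V}) : M \subset foldl gs M s.
Proof.
elim: s M => //= x s IH M; apply: subset_trans (IH (gs M x)).
rewrite /greedy_step; case: ifP => _ //; exact: subsetUr.
Qed.

Lemma foldl_sub (M : {set {set V}}) (s : seq {set V}) x : x \in foldl gs M s -> (x \in M) || (x \in s).
Proof.
elim: s M => /= [|y s IH] M; first by move=> ->.
move/IH; rewrite /greedy_step inE; case: ifP => _; rewrite ?inE;
  by case: (x == y); rewrite ?orbT //= ?orbF.
Qed.

Definition pre (e : {set V}) := take (index e pi) pi.
Definition Gpre (F : {set {set V}}) (e : {set V}) := foldl gs finset.set0 [seq x <- pre e | x \in F].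
Definition blocked (F : {set {set V}}) (e : {set V}) := ~~ [forall f in Gpre F e, [disjoint e & f]].

Lemma split_pi e : e \in pi -> pi = pre e ++ e :: drop (index e pi).+1 pi.
Proof.
move=> He; rewrite /pre -{1}(cat_take_drop (index e pi) pi).
by rewrite (drop_nth e) ?index_mem ?nth_index.
Qed.

Lemma notin_pre e : e \notin pre e.
Proof.
rewrite /pre; case He: (e \in pi); first by rewrite in_take // ltnn.
by apply/negP => /mem_take; rewrite He.
Qed.

Lemma notin_post e : e \in pi -> e \notin drop (index e pi).+1 pi.
Proof.
move=> He; have := pi_uniq; rewrite {1}(split_pi He) cat_uniq.
by case/and3P => _ _ /andP[].
Qed.

Lemma Gpre_mem (F : {set {set V}}) e x : x \in Gpre F e -> (x \in pre e) && (x \in F).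
Proof. by move/foldl_sub; rewrite inE /= mem_filter andbC. Qed.

Lemma Greedy_mem (F : {set {set V}}) x : x \in Greedy F pi -> (x \in E) && (x \in F).
Proof. by move/foldl_sub; rewrite inE /= mem_filter pi_mem andbC. Qed.

Lemma Greedy_P (F : {set {set V}}) e : e \in pi ->
  (e \in Greedy F pi) = (e \in F) && ~~ blocked F e.
Proof.
move=> He; rewrite /Greedy {1}(split_pi He) filter_cat foldl_cat -/(Gpre F e) /=.
rewrite /blocked negbK.
have nG : e \notin Gpre F e.
  by apply/negP => /Gpre_mem /andP[h _]; move: h; rewrite (negbTE (notin_pre e)).
have nR := notin_post He.
case: (e \in F) => /=; last first.
  apply/negP => /foldl_sub /orP[]; first exact/negP.
  by rewrite mem_filter => /andP[_]; apply/negP.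
rewrite /greedy_step; case: ifP => _.
  by apply: (subsetP (foldl_grow _ _)); rewrite !inE eqxx.
apply/negP => /foldl_sub /orP[]; first exact/negP.
by rewrite mem_filter => /andP[_]; apply/negP.
Qed.

Lemma Gpre_Greedy (F : {set {set V}}) e : Gpre F e \subset Greedy F pi.
Proof.
rewrite /Greedy -[X in [seq _ <- X | _]](cat_take_drop (index e pi) pi) filter_cat foldl_cat.
exact: foldl_grow.
Qed.

Lemma Gpre_weight (F : {set {set V}}) e f : e \in pi -> f \in Gpre F e -> w e <= w f.
Proof.
move=> He /Gpre_mem /andP[fp _].
have tr : transitive (fun a b => w b <= w a).
  by move=> y x z h1 h2; exact: le_trans h2 h1.
have sub : subseq [:: f; e] pi.
  rewrite (split_pi He) -cat1s; apply: cat_subseq; first by rewrite sub1seq.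
  by rewrite sub1seq mem_head.
by have := subseq_sorted tr sub pi_sorted => /= /andP[].
Qed.

Lemma pre_split (F : {set {set V}}) g e : g \in pre e -> exists s,
  Gpre F e = foldl gs (foldl gs (Gpre F g) [seq x <- [:: g] | x \in F]) s.
Proof.
move=> gp; have gpi : g \in pi by move: gp => /mem_take.
have lt : (index g pi < index e pi)%N by move: gp; rewrite /pre in_take.
exists [seq x <- drop (index g pi).+1 (pre e) | x \in F].
rewrite /Gpre -{1}(cat_take_drop (index g pi).+1 (pre e)) filter_cat foldl_cat.
rewrite /pre take_takel // (take_nth g) ?index_mem // nth_index //.
by rewrite -cats1 filter_cat foldl_cat.
Qed.

Lemma pre_mono (F : {set {set V}}) g e : g \in pre e -> Gpre F g \subset Gpre F e.
Proof.
move=> /(pre_split F) [s ->]; apply: subset_trans (foldl_grow _ _).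
exact: foldl_grow.
Qed.

Lemma pre_Greedy (F : {set {set V}}) g e : g \in pre e -> g \in Greedy F pi -> g \in Gpre F e.
Proof.
move=> gp gG; have gpi : g \in pi by move: gp => /mem_take.
move: gG; rewrite Greedy_P // => /andP[gF nb].
case: (pre_split F gp) => s ->; apply: (subsetP (foldl_grow _ _)).
rewrite /= gF /= /greedy_step; move: nb; rewrite /blocked negbK => ->.
by rewrite !inE eqxx.
Qed.

Lemma Gpre_eq (F F' : {set {set V}}) e : {in pre e, F =i F'} -> Gpre F e = Gpre F' e.
Proof. by move=> h; rewrite /Gpre; congr foldl; apply: eq_in_filter => x /h. Qed.

End G.

Lemma charge (R : realType) (T U : finType) (P : pred T) (Q : pred U) (a : T -> R)
  (W : U -> R) (rel : T -> U -> bool) :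
  (forall y, Q y -> 0 <= W y) ->
  (forall x, P x -> exists2 y, Q y && rel x y & a x <= W y) ->
  (forall x x' y, P x -> P x' -> Q y -> rel x y -> rel x' y -> x = x') ->
  \sum_(x | P x) a x <= \sum_(y | Q y) W y.
Proof.
move=> W0 ex inj.
apply: (@le_trans _ _ (\sum_(x | P x) \sum_(y | Q y && rel x y) W y)).
  apply: ler_sum => x Px; have [y /andP[Qy rxy] le] := ex x Px.
  rewrite (bigD1 y) /=; last by rewrite Qy rxy.
  apply: le_trans le _; rewrite lerDl; apply: sumr_ge0 => z /andP[/andP[Qz _] _].
  exact: W0.
rewrite (exchange_big_dep Q) /=; last by move=> x y _ /andP[].
apply: ler_sum => y Qy.
case: (pickP (fun x => P x && rel x y)) => [x0 /andP[Px0 r0]|none].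
  rewrite (big_pred1 x0) // => x; apply/idP/eqP => [/andP[Px /andP[_ rx]]|->].
    exact: inj Px Px0 Qy rx r0.
  by rewrite Px0 Qy r0.
rewrite big_pred0; first exact: W0.
by move=> x; rewrite Qy /=; apply: none.
Qed.

Lemma nondisjP (V : finType) (A B : {set V}) :
  reflect (exists2 u, u \in A & u \in B) (~~ [disjoint A & B]).
Proof.
rewrite -setI_eq0; apply: (iffP (set0Pn _)) => [[u]|[u uA uB]].
  by rewrite inE => /andP[]; exists u.
by exists u; rewrite inE uA uB.
Qed.

Lemma two_elems (V : finType) (g : {set V}) u u' z : #|g| = 2%N ->
  u \in g -> u' \in g -> u != u' -> z \in g -> (z == u) || (z == u').
Proof.
move=> /eqP /cards2P [x [y [nxy ->]]].
rewrite !inE => /orP[]/eqP-> /orP[]/eqP-> //; rewrite ?eqxx //;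
  move=> _ /orP[]/eqP->; rewrite ?eqxx ?orbT //.
Qed.

Section Point.
Variables (R : realType) (V : finType) (E : {set {set V}}) (w : {set V} -> R)
  (pi : seq {set V}).
Hypothesis pi_uniq : uniq pi.
Hypothesis pi_mem : forall x, (x \in pi) = (x \in E).
Hypothesis pi_sorted : sorted (fun a b => w b <= w a) pi.
Hypothesis Esimple : simple_graph E.
Hypothesis w0 : forall e, e \in E -> 0 <= w e.

Lemma card_edge e : e \in E -> #|e| = 2%N.
Proof. by move=> eE; move/forallP: Esimple => /(_ e); rewrite eE => /eqP. Qed.

Lemma matching_eq (Ms : {set {set V}}) e e' u : is_matching Ms ->
  e \in Ms -> e' \in Ms -> u \in e -> u \in e' -> e = e'.
Proof.
move=> /forallP/(_ e) + He He'; rewrite He /= => /forallP/(_ e').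
rewrite He' /=.
case: eqVneq => // _ /= dis hu; by rewrite (disjointFr dis hu).
Qed.

Lemma blockedP (F : {set {set V}}) e : blocked pi F e ->
  exists2 f, f \in Gpre pi F e & exists2 u, u \in e & u \in f.
Proof.
rewrite /blocked => /forallPn [f]; rewrite negb_imply => /andP[fG /nondisjP nd].
by exists f.
Qed.

Lemma blockedI (F : {set {set V}}) e f u :
  f \in Gpre pi F e -> u \in e -> u \in f -> blocked pi F e.
Proof.
move=> fG ue uf; apply/forallPn; exists f; rewrite negb_imply fG /=.
by apply/nondisjP; exists u.
Qed.

Lemma pointwise (G H Ms : {set {set V}}) :
  Greedy G pi \subset H -> Ms \subset E -> is_matching Ms ->
  weight w Ms <= 2 * weight w (Greedy H pi) + weight w (Greedy G pi)
     + \sum_(e in Ms) w e * ((e \notin H) && ~~ blocked pi G e)%:R.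
Proof.
move=> M1H MsE Msm.
set MG := Greedy H pi; set M1 := Greedy G pi.
have MsE' : forall e, e \in Ms -> e \in E by move=> e /(subsetP MsE).
have A1 : \sum_(e | (e \in Ms) && ((e \in MG) || blocked pi H e)) w e
          <= 2 * \sum_(e in MG) w e.
  have -> : 2 * \sum_(e in MG) w e =
    \sum_(y | (y.1 \in MG) && (y.2 \in y.1)) w y.1.
    rewrite -(pair_big_dep (fun f => f \in MG) (fun f u => u \in f) (fun f u => w f)).
    rewrite mulr_sumr; apply: eq_bigr => f fM; rewrite sumr_const.
    have /andP[fE _] := Greedy_mem pi_mem fM.
    by rewrite card_edge // mulr_natl.
  apply: (@charge R _ _ _ _ w (fun y => w y.1) (fun e y => y.2 \in e)).
  - by move=> y /andP[/(Greedy_mem pi_mem)/andP[yE _] _]; exact: w0.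
  - move=> e /andP[eM /orP[eMG|bl]].
      have : (0 < #|e|)%N by rewrite card_edge ?MsE'.
      case/card_gt0P => u ue; exists (e, u) => //=; by rewrite eMG ue.
    have [f fG [u ue uf]] := blockedP bl.
    exists (f, u); first by rewrite /= (subsetP (Gpre_Greedy pi H e)) // uf ue.
    by apply: (Gpre_weight pi_sorted _ fG); rewrite pi_mem MsE'.
  - move=> e e' y /andP[eM _] /andP[e'M _] _ h1 h2.
    exact: matching_eq Msm eM e'M h1 h2.
have A2 : \sum_(e | (e \in Ms) && ~~ ((e \in MG) || blocked pi H e)
                 && blocked pi G e) w e <= \sum_(e in M1) w e.
  apply: (@charge R _ _ _ _ w w
            (fun e g => (g \in Gpre pi G e) && ~~ [disjoint e & g])).
  - by move=> y /(Greedy_mem pi_mem)/andP[yE _]; exact: w0.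
  - move=> e /andP[/andP[eM _] bl].
    have [f fG [u ue uf]] := blockedP bl.
    exists f; first by rewrite (subsetP (Gpre_Greedy pi G e)) // fG /=;
      apply/nondisjP; exists u.
    by apply: (Gpre_weight pi_sorted _ fG); rewrite pi_mem MsE'.
  - move=> e e' g /andP[/andP[eM nb] _] /andP[/andP[e'M nb'] _] gM1.
    move=> /andP[gGe /nondisjP[u ue ug]] /andP[gGe' /nondisjP[u' ue' ug']].
    case: (eqVneq e e') => // ne; exfalso.
    have uu' : u != u'.
      apply/eqP => eu; move/eqP: ne; apply; apply: (matching_eq Msm eM e'M ue).
      by rewrite eu.
    have gH : g \in H by rewrite (subsetP M1H).
    have /andP[gpe _] := Gpre_mem gGe.
    have /andP[gpe' _] := Gpre_mem gGe'.
    have /andP[gE _] := Greedy_mem pi_mem gM1.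
    move: nb nb'; rewrite !negb_or => /andP[_ nb] /andP[_ nb'].
    case gMG: (g \in MG).
      have := blockedI (pre_Greedy pi_uniq gpe gMG) ue ug.
      by rewrite (negbTE nb).
    move: gMG; rewrite /MG (Greedy_P pi_uniq) ?pi_mem // gH /= => /negbFE blg.
    have [h hG [z zg zh]] := blockedP blg.
    case/orP: (two_elems (card_edge gE) ug ug' uu' zg) => /eqP zu; subst z.
      have := blockedI (subsetP (pre_mono H gpe) _ hG) ue zh.
      by rewrite (negbTE nb).
    have := blockedI (subsetP (pre_mono H gpe') _ hG) ue' zh.
    by rewrite (negbTE nb').
have A3 : \sum_(e | (e \in Ms) && ~~ ((e \in MG) || blocked pi H e)
                 && ~~ blocked pi G e) w e
          <= \sum_(e in Ms) w e * ((e \notin H) && ~~ blocked pi G e)%:R.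
  apply: (@le_trans _ _ (\sum_(e in Ms | ~~ ((e \in MG) || blocked pi H e)
        && ~~ blocked pi G e) w e * ((e \notin H) && ~~ blocked pi G e)%:R)).
    rewrite [X in X <= _](eq_bigl (fun e => (e \in Ms) &&
       (~~ ((e \in MG) || blocked pi H e) && ~~ blocked pi G e))); last first.
      by move=> e; rewrite andbA.
    apply: ler_sum => e /andP[eM /andP[nb nbG]].
    have -> : e \notin H.
      apply/negP => eH; move: nb; rewrite /MG (Greedy_P pi_uniq) ?pi_mem ?MsE' //.
      by rewrite eH /= orNb.
    by rewrite nbG mulr1.
  rewrite [X in _ <= X](bigID (fun e => ~~ ((e \in MG) || blocked pi H e)
                                        && ~~ blocked pi G e)) /= lerDl.
  apply: sumr_ge0 => e /andP[eM _]; apply: mulr_ge0; first exact: w0 (MsE' _ eM).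
  exact: ler0n.
rewrite /weight (bigID (fun e => (e \in MG) || blocked pi H e)) /=.
rewrite [X in _ + X <= _](_ : _ = \sum_(e | (e \in Ms) && ~~ ((e \in MG) || blocked pi H e)
                 && blocked pi G e) w e + \sum_(e | (e \in Ms) && ~~ ((e \in MG) || blocked pi H e)
                 && ~~ blocked pi G e) w e); last by rewrite (bigID (fun e => blocked pi G e)).
rewrite addrA; apply: lerD; last exact: A3.
exact: lerD A1 A2.

Qed.

End Point.

Section Resample.
Variables (R : realType) (I J : finType) (Phi : I -> J -> R) (a : I) (j0 : J).

Definition upd (g : {ffun I -> J}) (j : J) : {ffun I -> J} :=
  [ffun i => if i == a then j else g i].

Lemma resample (G : {ffun I -> J} -> R) :
  \sum_(f : {ffun I -> J}) (\prod_i Phi i (f i)) * G f =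
  \sum_(g : {ffun I -> J} | g a == j0) (\prod_(i | i != a) Phi i (g i)) *
      \sum_j Phi a j * G (upd g j).
Proof.
rewrite (partition_big (fun f : {ffun I -> J} => f a) predT) //=.
transitivity (\sum_j \sum_(g : {ffun I -> J} | g a == j0)
   Phi a j * (\prod_(i | i != a) Phi i (g i)) * G (upd g j)).
  apply: eq_bigr => j _.
  rewrite (reindex_onto (fun g => upd g j) (fun f => upd f j0)) /=; last first.
    move=> f /eqP fa; apply/ffunP => i; rewrite /upd !ffunE.
    by case: eqP => // ->; rewrite fa.
  apply: eq_big => g.
    rewrite /upd ffunE !eqxx /=; apply/eqP/eqP => [<-|ga]; first by rewrite ffunE eqxx.
    by apply/ffunP => i; rewrite !ffunE; case: eqP => // ->; rewrite ga.
  move=> _; rewrite (bigD1 a) //= /upd ffunE eqxx; congr (_ * _ * _).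
  by apply: eq_bigr => i /negbTE ia; rewrite ffunE ia.
rewrite exchange_big /=; apply: eq_bigr => g _; rewrite mulr_sumr.
by apply: eq_bigr => j _; rewrite (mulrC (Phi a j)) -mulrA.
Qed.

Lemma resample_le (G : {ffun I -> J} -> R) (C : R) :
  (forall i j, 0 <= Phi i j) -> \sum_j Phi a j = 1 ->
  (forall g, \sum_j Phi a j * G (upd g j) <= C) ->
  \sum_(f : {ffun I -> J}) (\prod_i Phi i (f i)) * G f <= C * \sum_(f : {ffun I -> J}) \prod_i Phi i (f i).
Proof.
move=> P0 P1 HG.
have E2 := resample (fun _ => C).
rewrite resample (_ : C * _ = \sum_(f : {ffun I -> J}) (\prod_i Phi i (f i)) * C); last first.
  by rewrite mulr_sumr; apply: eq_bigr => f _; rewrite mulrC.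
rewrite E2; apply: ler_sum => g _; apply: ler_wpM2l.
  by apply: prodr_ge0 => i _.
by rewrite -mulr_suml P1 mul1r.
Qed.

End Resample.

Section Clus.
Variables (R : realType) (V : finType) (E : {set {set V}}) (w : {set V} -> R)
  (pi : seq {set V}).
Hypothesis pi_uniq : uniq pi.
Hypothesis pi_mem : forall x, (x \in pi) = (x \in E).
Variables (k c : nat).
Hypothesis kpos : (0 < k)%N.
Hypothesis cpos : (0 < c)%N.
Hypothesis ck : (c <= k)%N.

Local Notation FF := {ffun {set V} -> {set 'I_k}}.

Let p : R := c%:R / k%:R.

Lemma p_gt0 : 0 < p.
Proof. by rewrite /p divr_gt0 // ltr0n. Qed.

Lemma p_le1 : p <= 1.
Proof. by rewrite /p ler_pdivrMr ?ltr0n // mul1r ler_nat. Qed.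

Definition rho (S : {set 'I_k}) : R := \prod_i (if i \in S then p else 1 - p).

Definition Phi (x : {set V}) (S : {set 'I_k}) : R :=
  if x \in E then rho S else (S == finset.set0)%:R.

Lemma rho_ge0 S : 0 <= rho S.
Proof.
apply: prodr_ge0 => i _; case: ifP => _; first exact: ltW p_gt0.
by rewrite subr_ge0 p_le1.
Qed.

Lemma Phi_ge0 x S : 0 <= Phi x S.
Proof. by rewrite /Phi; case: ifP => _; [exact: rho_ge0 | exact: ler0n]. Qed.

Lemma rho_disj (F : {set 'I_k}) :
  \sum_(S : {set 'I_k}) rho S * ([disjoint S & F])%:R = (1 - p) ^+ #|F|.
Proof.
transitivity (\sum_(S : {set 'I_k})
   \prod_i (if i \in S then (if i \in F then 0 else p) else 1 - p)).
  apply: eq_bigr => S _; case: (boolP [disjoint S & F]) => d.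
    rewrite mulr1; apply: eq_bigr => i _; case: ifP => // iS.
    by rewrite (disjointFr d iS).
  move/nondisjP: d => [i iS iF].
  by rewrite mulr0 (bigD1 i) //= iS iF mul0r.
rewrite -bigA_distr.
rewrite (eq_bigr (fun i => if i \in F then 1 - p else 1)); last first.
  by move=> i _; case: ifP => _ /=; [rewrite add0r | rewrite addrCA subrr addr0].
by rewrite -big_mkcond prodr_const.
Qed.

Lemma rho_sum : \sum_(S : {set 'I_k}) rho S = 1.
Proof.
have := rho_disj finset.set0; rewrite cards0 expr0 => <-.
apply: eq_bigr => S _; by rewrite -setI_eq0 setI0 eqxx mulr1.
Qed.

Lemma Phi_sum x : \sum_(S : {set 'I_k}) Phi x S = 1.
Proof.
rewrite /Phi; case: (x \in E); first exact: rho_sum.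
rewrite (bigD1 (finset.set0 : {set 'I_k})) //= eqxx big1 ?addr0 //.
by move=> S /negbTE ->.
Qed.

Lemma binom_rho (S : {set 'I_k}) :
  binom_pmf k p #|S| / 'C(k, #|S|)%:R = rho S.
Proof.
rewrite /binom_pmf /rho (bigID (fun i => i \in S)) /=.
have h1 : \prod_(i | i \in S) (if i \in S then p else 1 - p) = p ^+ #|S|.
  by rewrite -prodr_const; apply: eq_bigr => i ->.
have h2 : \prod_(i | i \notin S) (if i \in S then p else 1 - p)
          = (1 - p) ^+ (k - #|S|).
  have -> : (k - #|S|)%N = #|~: S| by have := cardsC S; rewrite card_ord; lia.
  rewrite -prodr_const; apply: eq_big => [i|i]; first by rewrite inE.
  by move=> /negbTE ->.
rewrite h1 h2.
have C0 : ('C(k, #|S|)%:R : R) != 0.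
  rewrite pnatr_eq0 -lt0n bin_gt0; have := max_card (mem S); rewrite card_ord; exact.
by rewrite mulrAC [_ * p ^+ _ / _]mulrAC divff // mul1r.
Qed.

Lemma cp_prod (f : FF) : cluster_prob R c E f = \prod_x Phi x (f x).
Proof.
rewrite /cluster_prob [RHS](bigID (fun x => x \in E)) /=; congr (_ * _).
  by apply: eq_bigr => x xE; rewrite /Phi xE binom_rho.
rewrite (eq_bigl (fun x => x \notin E)); last by move=> x; rewrite inE.
by apply: eq_bigr => x /negbTE xE; rewrite /Phi xE.
Qed.

Lemma cp_ge0 (f : FF) : 0 <= cluster_prob R c E f.
Proof. by rewrite cp_prod; apply: prodr_ge0 => x _; exact: Phi_ge0. Qed.

Lemma cp_sum : \sum_(f : FF) cluster_prob R c E f = 1.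
Proof.
under eq_bigr do rewrite cp_prod.
rewrite -bigA_distr_bigA big1 // => x _; exact: Phi_sum.
Qed.


Variable e : {set V}.
Hypothesis eE : e \in E.

Definition Hf (f : FF) := \bigcup_(i < k) Greedy (Defs.cluster E f i) pi.
Definition Fr (f : FF) := [set j : 'I_k | ~~ blocked pi (Defs.cluster E f j) e].
Definition badj (f : FF) (j : 'I_k) :=
  (e \notin Hf f) && ~~ blocked pi (Defs.cluster E f j) e.

Lemma blocked_upd (g : FF) S j :
  blocked pi (Defs.cluster E (upd e g S) j) e = blocked pi (Defs.cluster E g j) e.
Proof.
rewrite /blocked (Gpre_eq (F' := Defs.cluster E g j)) // => x xp.
rewrite !inE /upd ffunE; case: eqP => // xe; subst x.
by move: xp; rewrite (negbTE (@notin_pre _ pi e)).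
Qed.

Lemma Fr_upd (g : FF) S : Fr (upd e g S) = Fr g.
Proof. by apply/setP => j; rewrite !inE blocked_upd. Qed.

Lemma inH_upd (g : FF) S : (e \in Hf (upd e g S)) = ~~ [disjoint S & Fr g].
Proof.
have epi : e \in pi by rewrite pi_mem.
apply/bigcupP/nondisjP => [[i _]|[i iS iF]].
  rewrite (Greedy_P pi_uniq) // => /andP[].
  rewrite inE /upd ffunE eqxx eE /= => iS; rewrite -/(upd e g S) blocked_upd => nb.
  by exists i => //; rewrite inE.
exists i => //; rewrite (Greedy_P pi_uniq) // blocked_upd.
by rewrite inE /upd ffunE eqxx eE iS /=; move: iF; rewrite inE.
Qed.

Lemma sum_badj (f : FF) :
  \sum_j (badj f j)%:R = (e \notin Hf f)%:R * (#|Fr f|%:R : R).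
Proof.
rewrite /badj; case: (e \notin Hf f) => /=; last by rewrite mul0r big1.
rewrite mul1r -sum1_card natr_sum [RHS]big_mkcond /=.
by apply: eq_bigr => j _; rewrite inE; case: (~~ _).
Qed.

Lemma geom m : (1 + m%:R * p) * (1 - p) ^+ m <= 1.
Proof.
elim: m => [|m IH]; first by rewrite mul0r addr0 expr0 mulr1.
apply: le_trans IH; rewrite exprS mulrA; apply: ler_wpM2r.
  by rewrite exprn_ge0 // subr_ge0 p_le1.
rewrite -addn1 natrD.
have m0 : 0 <= (m%:R : R) := ler0n _ _.
have := p_gt0; have := p_le1; nra.
Qed.

Lemma m_bound m : m%:R * (1 - p) ^+ m <= k%:R / c%:R.
Proof.
rewrite -[k%:R / c%:R]invf_div -/p -(ler_pM2l p_gt0) mulfV ?gt_eqF ?p_gt0 //.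
apply: le_trans (geom m).
have X0 : 0 <= (1 - p) ^+ m by rewrite exprn_ge0 // subr_ge0 p_le1.
have -> : (1 + m%:R * p) * (1 - p) ^+ m = (1 - p) ^+ m + p * (m%:R * (1 - p) ^+ m).
  by ring.
by rewrite lerDr.
Qed.

Lemma inner (g : FF) :
  \sum_S rho S * (\sum_j (badj (upd e g S) j)%:R) <= k%:R / c%:R.
Proof.
under eq_bigr do rewrite sum_badj inH_upd negbK Fr_upd.
rewrite (eq_bigr (fun S => rho S * ([disjoint S & Fr g])%:R * #|Fr g|%:R));
  last by move=> S _; rewrite mulrA.
by rewrite -mulr_suml rho_disj mulrC; exact: m_bound.
Qed.


Definition swap (a b i : 'I_k) := if i == a then b else if i == b then a else i.

Lemma swapK a b : involutive (swap a b).
Proof.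
move=> i; rewrite /swap.
case: (eqVneq i a) => [->|ia]; first by rewrite eqxx; case: eqVneq.
case: (eqVneq i b) => [->|ib]; first by rewrite eqxx.
by rewrite (negbTE ia) (negbTE ib).
Qed.

Definition fsw a b (f : FF) : FF := [ffun x => swap a b @^-1: f x].

Lemma fswK a b : involutive (fsw a b).
Proof.
by move=> f; apply/ffunP => x; rewrite !ffunE; apply/setP => i; rewrite !inE swapK.
Qed.

Lemma cluster_sw a b f i :
  Defs.cluster E (fsw a b f) i = Defs.cluster E f (swap a b i).
Proof. by apply/setP => x; rewrite !inE ffunE inE. Qed.

Lemma Hf_sw a b f : Hf (fsw a b f) = Hf f.
Proof.
rewrite /Hf; under eq_bigr do rewrite cluster_sw.
by rewrite [RHS](reindex_inj (inv_inj (swapK a b))).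
Qed.

Lemma Phi_sw a b x (S : {set 'I_k}) : Phi x (swap a b @^-1: S) = Phi x S.
Proof.
rewrite /Phi; case: (x \in E).
  rewrite /rho [RHS](reindex_inj (inv_inj (swapK a b))).
  by apply: eq_bigr => i _; rewrite inE.
case: (eqVneq S finset.set0) => [->|nS].
  rewrite (_ : _ @^-1: _ = finset.set0) ?eqxx //.
  by apply/setP => i; rewrite !inE.
case/set0Pn: nS => i iS.
rewrite (_ : (_ == _) = false) //; apply/negbTE/set0Pn; exists (swap a b i).
by rewrite inE swapK.
Qed.

Lemma cp_sw a b f : cluster_prob R c E (fsw a b f) = cluster_prob R c E f.
Proof. by rewrite !cp_prod; apply: eq_bigr => x _; rewrite ffunE Phi_sw. Qed.

Lemma E_sym i0 j :
  \sum_(f : FF) cluster_prob R c E f * (badj f i0)%:R =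
  \sum_(f : FF) cluster_prob R c E f * (badj f j)%:R.
Proof.
rewrite (reindex_inj (inv_inj (fswK i0 j))) /=; apply: eq_bigr => f _.
by rewrite cp_sw /badj Hf_sw cluster_sw /swap eqxx.
Qed.

Lemma E_bad i0 :
  \sum_(f : FF) cluster_prob R c E f * (badj f i0)%:R <= c%:R^-1.
Proof.
set L := \sum_(f : FF) _.
have kL : k%:R * L = \sum_(f : FF) cluster_prob R c E f * \sum_j (badj f j)%:R.
  have h : \sum_(j : 'I_k) L = L *+ k by rewrite sumr_const card_ord.
  rewrite mulr_natl -h.
  rewrite (eq_bigr (fun j => \sum_(f : FF) cluster_prob R c E f * (badj f j)%:R));
    last by move=> j _; rewrite /L (E_sym i0 j).
  rewrite exchange_big /=; apply: eq_bigr => f _; by rewrite mulr_sumr.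
have H2 : \sum_(f : FF) cluster_prob R c E f * \sum_j (badj f j)%:R
          <= k%:R / c%:R.
  under eq_bigr do rewrite cp_prod.
  apply: le_trans (@resample_le R _ _ Phi e finset.set0
            (fun f => \sum_j (badj f j)%:R) (k%:R / c%:R) _ _ _) _.
  - by move=> x S; exact: Phi_ge0.
  - exact: Phi_sum.
  - by move=> g; rewrite /Phi eE; exact: inner.
  have := cp_sum; under eq_bigr do rewrite cp_prod; move=> ->.
  by rewrite mulr1.
have kp : 0 < (k%:R : R) by rewrite ltr0n.
rewrite -(ler_pM2l kp) kL; apply: le_trans H2 _.
by rewrite mulrC.
Qed.

End Clus.

Lemma alg_mem (R : realType) (V : finType) (E : {set {set V}}) (w : {set V} -> R)
  (pi : seq {set V}) (k : nat) (f : {ffun {set V} -> {set 'I_k}}) x :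
  (forall x, (x \in pi) = (x \in E)) ->
  x \in alg_output E w pi f -> x \in E.
Proof.
move=> pi_mem; rewrite /alg_output.
case: (insub 0%N) => [i0|]; case: ifP => _;
  (by move=> /(Greedy_mem pi_mem) /andP[]) || (by rewrite inE).
Qed.

Lemma wmax3 (R : realType) (V : finType) (w : {set V} -> R) (A B : {set {set V}}) :
  2 * weight w B + weight w A <=
  3 * weight w (if weight w A <= weight w B then B else A).
Proof.
case: ifPn => h; first lra.
rewrite -ltNge in h; lra.
Qed.

Lemma alg_ge (R : realType) (V : finType) (E : {set {set V}}) (w : {set V} -> R)
  (pi : seq {set V}) (k : nat) (kpos : (0 < k)%N) (f : {ffun {set V} -> {set 'I_k}}) :
  2 * weight w (Greedy (Hf E pi f) pi)
    + weight w (Greedy (Defs.cluster E f (Ordinal kpos)) pi)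
  <= 3 * weight w (alg_output E w pi f).
Proof.
rewrite /alg_output (insubT (fun n => (n < k)%N) kpos) /=.
exact: wmax3.
Qed.

Theorem theorem3p6 (R : realType) :
  exists (c : R -> nat) (C1 C2 eps0 : R),
    [/\ 0 < C1, 0 < C2, 0 < eps0 <= 1 &
    (forall eps : R, 0 < eps < eps0 ->
       C1 * (ln eps^-1 / eps) <= (c eps)%:R <= C2 * (ln eps^-1 / eps))] /\
    forall eps : R, 0 < eps < 1 ->
    forall (V : finType) (E : {set {set V}}) (w : {set V} -> R)
           (pi : seq {set V}) (k : nat),
      simple_graph E ->
      (forall e, e \in E -> 0 <= w e) ->
      weight_order E w pi ->
      (c eps <= k)%N ->
      opt E w <= (3 + eps) * expected_weight k (c eps) E w pi.
Proof.
pose X (eps : R) := 8 * (1 + ln eps^-1) / eps.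
pose cf (eps : R) : nat := (Num.trunc (X eps)).+1.
have cfP : forall eps : R, 0 < eps < 1 ->
   [/\ 0 < ln eps^-1, X eps < (cf eps)%:R & (cf eps)%:R <= X eps + 1].
  move=> eps /andP[e0 e1].
  have L0 : 0 < ln eps^-1 by apply: ln_gt0; rewrite invf_gt1.
  have X0 : 0 <= X eps.
    rewrite /X; apply: divr_ge0; last exact: ltW.
    by apply: mulr_ge0 => //; rewrite addr_ge0 // ltW.
  have := truncn_itv X0; rewrite /cf => /andP[h1 h2].
  by split => //; rewrite -natr1 lerD2r.
exists cf, 8, 17, (expR (-1)); split.
  split => //; first by rewrite expR_gt0 /= expR_le1 lerN10.
  move=> eps /andP[e0 e1].
  have e1' : eps < 1 by apply: (lt_trans e1); rewrite expR_lt1 ltrN10.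
  have [L0 h1 h2] := cfP eps (introT andP (conj e0 e1')).
  set L := ln eps^-1 in L0 h1 h2 *.
  have L1 : 1 < L.
    have ie : 0 < eps^-1 by rewrite invr_gt0.
    rewrite /L -(ltr_expR) lnK ?posrE //.
    by rewrite -(invrK (expR 1)) ltf_pV2 ?posrE ?invr_gt0 ?expR_gt0 // -expRN.
  move: h1 h2; rewrite /X -/L => h1 h2.
  have t1 : 1 < eps^-1 by rewrite invf_gt1.
  set t := eps^-1 in t1 h1 h2 *.
  apply/andP; split; first by apply: le_trans (ltW h1); nra.
  apply: le_trans h2 _; nra.
move=> eps /andP[e0 e1] V E w pi k Es w0 /andP[pperm psorted] ck.
have pi_uniq : uniq pi by rewrite (perm_uniq pperm) enum_uniq.
have pi_mem : forall x, (x \in pi) = (x \in E).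
  by move=> x; rewrite (perm_mem pperm) mem_enum.
have [L0 h1 h2] := cfP eps (introT andP (conj e0 e1)).
set cN := cf eps in ck h1 h2 *.
have cpos : (0 < cN)%N by [].
have kpos : (0 < k)%N by apply: leq_trans ck.
have ecN : 8 <= eps * cN%:R.
  move: h1; rewrite /X => h1.
  have : 8 * (1 + ln eps^-1) <= eps * cN%:R.
    by rewrite -ler_pdivrMl // mulrC; exact: ltW.
  apply: le_trans; rewrite ler_peMr //; rewrite lerDl; exact: ltW.
set Ex := expected_weight k cN E w pi.
have Ex0 : 0 <= Ex.
  apply: sumr_ge0 => f _; apply: mulr_ge0; first by have := cp_ge0 R E pi_uniq kpos cpos ck f.
  by apply: sumr_ge0 => x /(alg_mem pi_mem) /w0.
rewrite /opt; apply: (big_ind (fun x => x <= (3 + eps) * Ex)).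
- by apply: mulr_ge0 => //; lra.
- by move=> x y hx hy; rewrite ge_max hx hy.
move=> M /andP[ME Mm].
set W := weight w M.
have W0 : 0 <= W by apply: sumr_ge0 => x /(subsetP ME) /w0.
set i0 := Ordinal kpos.
have key : W - W * cN%:R^-1 <= 3 * Ex.
  rewrite /Ex /expected_weight mulr_sumr.
  apply: (@le_trans _ _ (\sum_(f : {ffun {set V} -> {set 'I_k}})
      cluster_prob R cN E f *
        (W - \sum_(e in M) w e * (badj E pi e f i0)%:R))).
    rewrite (eq_bigr (fun f => cluster_prob R cN E f * W -
       \sum_(e in M) w e * (cluster_prob R cN E f * (badj E pi e f i0)%:R)));
      last first.
      move=> f _; rewrite mulrBr [X in _ - X]mulr_sumr; congr (_ - _).
      by apply: eq_bigr => e _; rewrite mulrCA.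
    rewrite sumrB -mulr_suml (cp_sum R E pi_uniq kpos cpos ck) mul1r.
    rewrite lerD2l lerN2 exchange_big /= [X in _ <= X]mulr_suml.
    apply: ler_sum => e eM; rewrite -mulr_sumr; apply: ler_wpM2l.
      exact: w0 (subsetP ME _ eM).
    exact: (E_bad R pi_uniq pi_mem kpos cpos ck (subsetP ME _ eM) i0).
  apply: ler_sum => f _; rewrite mulrCA; apply: ler_wpM2l.
    by have := cp_ge0 R E pi_uniq kpos cpos ck f.
  apply: le_trans (@alg_ge R V E w pi k kpos f).
  rewrite lerBlDr.
  apply: (pointwise pi_uniq pi_mem psorted Es w0) => //.
  exact: (finset.bigcup_sup i0).
have u0 : 0 <= cN%:R^-1 :> R by rewrite invr_ge0.
have cN0 : 0 < cN%:R :> R by rewrite ltr0n.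
have ub : cN%:R^-1 <= eps / 8.
  by rewrite -(ler_pM2r cN0) mulVf ?gt_eqF // mulrAC ler_pdivlMr //; lra.
set u := cN%:R^-1 in key u0 ub.
have Wu : W * u <= W * (eps / 8) by apply: ler_wpM2l.
have Wu0 : 0 <= W * u by apply: mulr_ge0.
set Y := W * u in key Wu Wu0.
have h3 : eps * (W - Y) <= eps * (3 * Ex) by apply: ler_wpM2l => //; lra.
have Wu' : W * (eps / 8) <= W * (1 / 8) by apply: ler_wpM2l => //; lra.
have h4 : eps * (7 / 8 * W) <= eps * (W - Y) by apply: ler_wpM2l => //; lra.
have eW : 0 <= eps * W by apply: mulr_ge0 => //; lra.
nra.
Qed.
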